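(* Let $n\ge 1$ and let $\Phi=\Phi(A,O,Y,\bar{\mathbf d})$ be an $n$-mode Gaussian superchannel, with $A=(a_{kl})$, $O=(o_{kl})$, $Y=(y_{kl})$ real $2n\times 2n$ matrices and $\bar{\mathbf d}=(\bar d_1,\dots,\bar d_{2n})^{\mathrm T}\in\mathbb R^{2n}$. Then $\Phi$ is a real Gaussian superchannel if and only if $$\bar d_{2k}=0\quad\text{and}\quad y_{2k-1,2l}=0\qquad\text{for all }k,l\in\{1,\dots,n\},\tag{a}$$ and moreover either $$a_{2k,2l-1}=a_{2k,2l}=0\qquad\text{for all }k,l\in\{1,\dots,n\},\tag{b}$$ or $$a_{2k-1,2l}=a_{2k,2l-1}=0\ \text{ and }\ o_{2k-1,2l}=o_{2k,2l-1}=0\qquad\text{for all }k,l\in\{1,\dots,n\}.\tag{c}$$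
   Context: Fix $n\ge1$. Let $\Delta_n=\bigoplus_{k=1}^n\begin{pmatrix}0&1\\-1&0\end{pmatrix}$ and $\Sigma_n=\bigoplus_{k=1}^n\begin{pmatrix}1&0\\0&-1\end{pmatrix}$ (both $2n\times2n$). An $n$-mode Gaussian channel is identified with a triple $\phi=\phi(T,N,\mathbf d)$, where $T=(t_{kl})$ and $N=(n_{kl})$ are real $2n\times 2n$ matrices with $N=N^{\mathrm T}\ge0$, $\mathbf d=(d_1,\dots,d_{2n})^{\mathrm T}\in\mathbb R^{2n}$, and $N+i\Delta_n-iT\Delta_nT^{\mathrm T}\ge0$ (it maps a Gaussian state with displacement vector $\bar{\mathbf d}_0$ and covariance matrix $\nu$ to the Gaussian state with displacement $T\bar{\mathbf d}_0+\mathbf d$ and covariance matrix $T\nu T^{\mathrm T}+N$). Such a channel is called real if $d_{2k}=0$ and $n_{2k-1,2l}=0$ for all $k,l\in\{1,\dots,n\}$, and either $t_{2k,2l-1}=t_{2k,2l}=0$ for all $k,l$, or $t_{2k-1,2l}=t_{2k,2l-1}=0$ for all $k,l$. An $n$-mode Gaussian superchannel is identified with a quadruple $\Phi=\Phi(A,O,Y,\bar{\mathbf d})$ of real $2n\times2n$ matrices $A,O,Y$ and a vector $\bar{\mathbf d}\in\mathbb R^{2n}$ with $Y=Y^{\mathrm T}$, $OO^{\mathrm T}=I_{2n}$, $Y+i\Delta_n-iA\Delta_nA^{\mathrm T}\ge0$ and $i\Delta_n-iO\Delta_nO^{\mathrm T}\ge0$; it acts on Gaussian channels by $\Phi(\phi(T,N,\mathbf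 d))=\phi(AT\Sigma_nO^{\mathrm T}\Sigma_n,\ ANA^{\mathrm T}+Y,\ A\mathbf d+\bar{\mathbf d})$. A Gaussian superchannel is called real if it maps every real Gaussian channel to a real Gaussian channel. *)

(* Defs.v *)
From HB Require Import structures.
From mathcomp Require Import all_boot all_order all_algebra.
From mathcomp Require Import complex.
Set Implicit Arguments. Unset Strict Implicit. Unset Printing Implicit Defensive.
Import Order.TTheory GRing.Theory Num.Theory.
Local Open Scope ring_scope.

(* Indices are 0-based: the paper's (1-based) index 2k-1 is an even index
   here, and the paper's index 2k is an odd index here. *)

Section Defs.
Variable R : rcfType.
Variable n : nat.

(* Delta_n = direct sum of n copies of [[0,1],[-1,0]] *)
Definition Delta : 'M[R]_(2 * n) :=
  \matrix_(i, j)
    if (i : nat)./2 == (j : nat)./2 then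
      (if ~~ odd i && odd j then 1 else if odd i && ~~ odd j then -1 else 0)
    else 0.

Definition Sigma : 'M[R]_(2 * n) :=
  \matrix_(i, j) if i == j then (if odd i then -1 else 1) else 0.

Definition cmx (M : 'M[R]_(2 * n)) : 'M[R[i]]_(2 * n) := map_mx (real_complex R) M.

(* positive semidefiniteness of a complex square matrix:
   v^* M v >= 0 (i.e. real and nonnegative) for every complex vector v *)
Definition psdC (M : 'M[R[i]]_(2 * n)) : Prop :=
  forall v : 'cV[R[i]]_(2 * n), 0 <= ((map_mx (@conjc R) v)^T *m M *m v) 0 0.

Definition unc_mx (N T : 'M[R]_(2 * n)) : 'M[R[i]]_(2 * n) :=
  cmx N + 'i%C *: cmx Delta - 'i%C *: cmx (T *m Delta *m T^T).

Definition gaussian_channel (T N : 'M[R]_(2 * n)) (d : 'cV[R]_(2 * n)) : Prop :=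
  N^T = N /\ psdC (cmx N) /\ psdC (unc_mx N T).

Definition real_gaussian_channel (T N : 'M[R]_(2 * n)) (d : 'cV[R]_(2 * n)) : Prop :=
  gaussian_channel T N d /\
  (forall i : 'I_(2 * n), odd i -> d i 0 = 0) /\
  (forall i j : 'I_(2 * n), ~~ odd i -> odd j -> N i j = 0) /\
  ((forall i j : 'I_(2 * n), odd i -> T i j = 0) \/
   (forall i j : 'I_(2 * n), odd i != odd j -> T i j = 0)).

Definition gaussian_superchannel (A O Y : 'M[R]_(2 * n)) (dbar : 'cV[R]_(2 * n)) : Prop :=
  Y^T = Y /\ O *m O^T = 1%:M /\ psdC (unc_mx Y A) /\ psdC (unc_mx 0 O).

Definition sc_T (A O : 'M[R]_(2 * n)) (T : 'M[R]_(2 * n)) : 'M[R]_(2 * n) :=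
  A *m T *m Sigma *m O^T *m Sigma.
Definition sc_N (A Y : 'M[R]_(2 * n)) (N : 'M[R]_(2 * n)) : 'M[R]_(2 * n) :=
  A *m N *m A^T + Y.
Definition sc_d (A : 'M[R]_(2 * n)) (dbar d : 'cV[R]_(2 * n)) : 'cV[R]_(2 * n) :=
  A *m d + dbar.

Definition real_gaussian_superchannel (A O Y : 'M[R]_(2 * n)) (dbar : 'cV[R]_(2 * n)) : Prop :=
  gaussian_superchannel A O Y dbar /\
  forall (T N : 'M[R]_(2 * n)) (d : 'cV[R]_(2 * n)),
    real_gaussian_channel T N d ->
    real_gaussian_channel (sc_T A O T) (sc_N A Y N) (sc_d A dbar d).

End Defs.

(* Main.v *)
Require Import Defs.
From HB Require Import structures.
From mathcomp Require Import all_boot all_order all_algebra.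
From mathcomp Require Import complex.
From mathcomp Require Import ring zify.
From Stdlib Require Import Classical.
Import Order.TTheory GRing.Theory Num.Theory.
Local Open Scope ring_scope.

Set Implicit Arguments. Unset Strict Implicit.

Lemma conji (R : rcfType) : (('i%C : R[i])^*)%C = - 'i%C.
Proof. by apply/eqP; rewrite eq_complex /= oppr0 !eqxx. Qed.

Definition qf {R : rcfType} {n : nat} (M : 'M[R[i]]_(2*n)) (v : 'cV[R[i]]_(2*n)) :=
  ((map_mx (@conjc R) v)^T *m M *m v) 0 0.

Lemma qfD (R : rcfType) (n : nat) (M1 M2 : 'M[R[i]]_(2*n)) v :
  qf (M1 + M2) v = qf M1 v + qf M2 v.
Proof. by rewrite /qf mulmxDr mulmxDl mxE. Qed.

Lemma qfB (R : rcfType) (n : nat) (M1 M2 : 'M[R[i]]_(2*n)) v :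
  qf (M1 - M2) v = qf M1 v - qf M2 v.
Proof. by rewrite /qf mulmxBr mulmxBl !mxE. Qed.

Lemma qfZ (R : rcfType) (n : nat) (a : R[i]) (M : 'M[R[i]]_(2*n)) v :
  qf (a *: M) v = a * qf M v.
Proof. by rewrite /qf -scalemxAr -scalemxAl mxE. Qed.

Lemma psdD (R : rcfType) (n : nat) (M1 M2 : 'M[R[i]]_(2*n)) :
  psdC M1 -> psdC M2 -> psdC (M1 + M2).
Proof. move=> h1 h2 v; change (0 <= qf (M1 + M2) v); rewrite qfD; exact: addr_ge0 (h1 v) (h2 v). Qed.

Lemma cmx_conj (R : rcfType) (n : nat) (B : 'M[R]_(2*n)) :
  map_mx (@conjc R) (cmx B) = cmx B.
Proof. by apply/matrixP => i j; rewrite !mxE conjc_real. Qed.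

Lemma psd_congr (R : rcfType) (n : nat) (M : 'M[R[i]]_(2*n)) (B : 'M[R]_(2*n)) :
  psdC M -> psdC (cmx B *m M *m (cmx B)^T).
Proof.
move=> h v; have := h ((cmx B)^T *m v).
rewrite map_mxM -!map_trmx cmx_conj trmx_mul trmxK !mulmxA.
done.
Qed.

Definition Pm {R : rcfType} {n : nat} (N K : 'M[R]_(2*n)) : 'M[R[i]]_(2*n) :=
  cmx N + 'i%C *: cmx K.

Lemma cmxD (R : rcfType) (n : nat) (A B : 'M[R]_(2*n)) : cmx (A + B) = cmx A + cmx B.
Proof. exact: map_mxD. Qed.
Lemma cmxB (R : rcfType) (n : nat) (A B : 'M[R]_(2*n)) : cmx (A - B) = cmx A - cmx B.
Proof. exact: map_mxB. Qed.
Lemma cmxM (R : rcfType) (n : nat) (A B : 'M[R]_(2*n)) : cmx (A *m B) = cmx A *m cmx B.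
Proof. exact: map_mxM. Qed.
Lemma cmxT (R : rcfType) (n : nat) (A : 'M[R]_(2*n)) : cmx (A^T) = (cmx A)^T.
Proof. by rewrite /cmx map_trmx. Qed.
Lemma cmx0 (R : rcfType) (n : nat) : cmx (0 : 'M[R]_(2*n)) = 0.
Proof. exact: map_mx0. Qed.

Lemma unc_Pm (R : rcfType) (n : nat) (N T : 'M[R]_(2*n)) :
  unc_mx N T = Pm N (Delta R n - T *m Delta R n *m T^T).
Proof. by rewrite /unc_mx /Pm cmxB scalerBr addrA. Qed.

Lemma Pm_congr (R : rcfType) (n : nat) (N K B : 'M[R]_(2*n)) :
  psdC (Pm N K) -> psdC (Pm (B *m N *m B^T) (B *m K *m B^T)).
Proof.
move=> h; have := psd_congr B h.
by rewrite /Pm mulmxDr mulmxDl -scalemxAr -scalemxAl !cmxM cmxT.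
Qed.

Lemma Pm_add (R : rcfType) (n : nat) (N1 K1 N2 K2 : 'M[R]_(2*n)) :
  psdC (Pm N1 K1) -> psdC (Pm N2 K2) -> psdC (Pm (N1 + N2) (K1 + K2)).
Proof.
move=> h1 h2; have := psdD h1 h2.
by rewrite /Pm !cmxD scalerDr addrACA.
Qed.

Lemma Pm_real (R : rcfType) (n : nat) (N K : 'M[R]_(2*n)) :
  psdC (Pm N K) -> psdC (cmx N).
Proof.
move=> h v.
have h1 : 0 <= qf (Pm N K) v := h v.
have h2 : 0 <= qf (Pm N K) (map_mx (@conjc R) v) := h (map_mx (@conjc R) v).
have cc : map_mx (@conjc R) (map_mx (@conjc R) v) = v.
  by apply/matrixP=> a b; rewrite !mxE conjcK.
have e : qf (Pm N K) (map_mx (@conjc R) v) = ((qf (cmx N) v) - 'i%C * qf (cmx K) v)^*%C.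
  rewrite -qfZ -qfB /qf cc.
  have -> : forall X : 'M[R[i]]_1, ((X 0 0)^*)%C = (map_mx (@conjc R) X) 0 0 by move=> X; rewrite mxE.
  rewrite !map_mxM -map_trmx cc map_mxB cmx_conj; congr ((_ *m _ *m _) 0 0).
  by apply/matrixP=> a b; rewrite !mxE /=; apply/eqP; rewrite eq_complex; apply/andP; split; apply/eqP; simpl; ring.
rewrite e conj_ge0 in h2.
rewrite /Pm qfD qfZ in h1.
change (0 <= qf (cmx N) v).
have -> : qf (cmx N) v = ((qf (cmx N) v + 'i%C * qf (cmx K) v) + (qf (cmx N) v - 'i%C * qf (cmx K) v)) / 2%:R.
  by field.
by apply: divr_ge0; [exact: addr_ge0 | exact: ler0n].
Qed.


Definition sg {R : rcfType} (b : bool) : R := if b then -1 else 1.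

Lemma Sigma_mull (R : rcfType) (n : nat) (M : 'M[R]_(2*n)) i j :
  (Sigma R n *m M) i j = sg (odd i) * M i j.
Proof.
rewrite mxE (bigD1 i) //= big1 => [|k /negbTE nk]; first by rewrite !mxE eqxx addr0.
by rewrite !mxE eq_sym nk mul0r.
Qed.

Lemma Sigma_mulr (R : rcfType) (n : nat) (M : 'M[R]_(2*n)) i j :
  (M *m Sigma R n) i j = M i j * sg (odd j).
Proof.
rewrite mxE (bigD1 j) //= big1 => [|k /negbTE nk]; first by rewrite !mxE eqxx addr0.
by rewrite !mxE nk mulr0.
Qed.

Lemma sg2 (R : rcfType) b : sg b * sg b = 1 :> R.
Proof. by case: b; rewrite /sg ?mulrNN mulr1. Qed.

Lemma SigmaT (R : rcfType) (n : nat) : (Sigma R n)^T = Sigma R n.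
Proof. apply/matrixP=> i j; rewrite !mxE eq_sym; case: eqP => // ->. by []. Qed.

Lemma Sigma2 (R : rcfType) (n : nat) : Sigma R n *m Sigma R n = 1%:M.
Proof.
apply/matrixP=> i j; rewrite Sigma_mull !mxE.
case: eqP => [->|_]; last by rewrite mulr0.
by rewrite -/(sg (odd j)) sg2.
Qed.

Lemma SDS (R : rcfType) (n : nat) :
  Sigma R n *m Delta R n *m Sigma R n = - Delta R n.
Proof.
apply/matrixP=> i j; rewrite Sigma_mulr Sigma_mull !mxE /sg.
case: (odd i); case: (odd j); case: eqP => _ /=; ring.
Qed.


Lemma zid (V : zmodType) (d p q b : V) :
  d + b = (p - q) + (d - p) + (b + q).
Proof. by rewrite [p - q + _]addrC -[d - p + _]addrA addKr addrACA addNr addr0. Qed.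

Lemma congrB (R : rcfType) (n : nat) (X Y Z : 'M[R]_(2*n)) :
  X *m (Y - Z) *m X^T = X *m Y *m X^T - X *m Z *m X^T.
Proof. by rewrite mulmxBr mulmxBl. Qed.

Lemma congrC (R : rcfType) (n : nat) (X Y Z : 'M[R]_(2*n)) :
  X *m (Y *m Z *m Y^T) *m X^T = (X *m Y) *m Z *m (X *m Y)^T.
Proof. by rewrite trmx_mul !mulmxA. Qed.

Lemma Kident (R : rcfType) (n : nat) (A O T : 'M[R]_(2*n)) :
  O^T *m O = 1%:M ->
  let B := A *m T *m Sigma R n *m O^T in
  Delta R n - sc_T A O T *m Delta R n *m (sc_T A O T)^T =
  A *m (Delta R n - T *m Delta R n *m T^T) *m A^T
  + (Delta R n - A *m Delta R n *m A^T)
  + B *m (Delta R n - O *m Delta R n *m O^T) *m B^T.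
Proof.
move=> hO B.
have e1 : sc_T A O T *m Delta R n *m (sc_T A O T)^T = - (B *m Delta R n *m B^T).
  rewrite /sc_T -/B trmx_mul SigmaT !mulmxA -(mulmxA B) -(mulmxA B) SDS.
  by rewrite mulmxN mulNmx.
have e2 : B *m (O *m Delta R n *m O^T) *m B^T
   = - ((A *m T) *m Delta R n *m (A *m T)^T).
  rewrite congrC.
  have -> : B *m O = A *m T *m Sigma R n by rewrite /B -mulmxA hO mulmx1.
  rewrite trmx_mul SigmaT !mulmxA -(mulmxA (A *m T)) -(mulmxA (A *m T)) SDS.
  by rewrite mulmxN mulNmx.
rewrite e1 congrB congrB e2 congrC !opprK.
exact: zid.
Qed.


Definition PB {R : rcfType} {m : nat} (M : 'M[R]_m) :=
  forall i j : 'I_m, odd i != odd j -> M i j = 0.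
Definition OR {R : rcfType} {m : nat} (M : 'M[R]_m) :=
  forall i j : 'I_m, odd i -> M i j = 0.
Definition EO {R : rcfType} {m : nat} (M : 'M[R]_m) :=
  forall i j : 'I_m, ~~ odd i -> odd j -> M i j = 0.

Lemma PB_mul (R : rcfType) m (X Y : 'M[R]_m) : PB X -> PB Y -> PB (X *m Y).
Proof.
move=> hX hY i j hij; rewrite mxE big1 // => k _.
have [e|e] := eqVneq (odd i) (odd k).
  by rewrite (hY k j) ?mulr0 // -e.
by rewrite hX ?mul0r.
Qed.

Lemma OR_mul (R : rcfType) m (X Y : 'M[R]_m) : OR X -> OR (X *m Y).
Proof. by move=> hX i j hi; rewrite mxE big1 // => k _; rewrite hX ?mul0r. Qed.

Lemma PB_OR_mul (R : rcfType) m (X Y : 'M[R]_m) : PB X -> OR Y -> OR (X *m Y).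
Proof.
move=> hX hY i j hi; rewrite mxE big1 // => k _.
case ok: (odd k); first by rewrite hY ?mulr0.
by rewrite hX ?mul0r // hi ok.
Qed.

Lemma PB_tr (R : rcfType) m (X : 'M[R]_m) : PB X -> PB X^T.
Proof. by move=> h i j hij; rewrite mxE h // eq_sym. Qed.

Lemma PB_EO_mul (R : rcfType) m (X Y : 'M[R]_m) : PB X -> EO Y -> EO (X *m Y).
Proof.
move=> hX hY i j hi hj; rewrite mxE big1 // => k _.
case ok: (odd k); last by rewrite hY ?mulr0 ?ok.
by rewrite hX ?mul0r // ok; case: (odd i) hi.
Qed.

Lemma EO_PB_mul (R : rcfType) m (X Y : 'M[R]_m) : EO X -> PB Y -> EO (X *m Y).
Proof.
move=> hX hY i j hi hj; rewrite mxE big1 // => k _.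
case ok: (odd k); first by rewrite hX ?mul0r ?ok.
by rewrite hY ?mulr0 // ok hj.
Qed.

Lemma EO_ORT_mul (R : rcfType) m (X Y : 'M[R]_m) : OR Y -> EO (X *m Y^T).
Proof. by move=> hY i j hi hj; rewrite mxE big1 // => k _; rewrite mxE hY ?mulr0. Qed.

Lemma PB_Sigma (R : rcfType) (n : nat) : PB (Sigma R n).
Proof. by move=> i j hij; rewrite mxE; case: eqP => // e; rewrite e eqxx in hij. Qed.


Definition pr {m : nat} (k : 'I_m) : 'I_m := Ordinal (leq_ltn_trans (leq_pred k) (ltn_ord k)).

Lemma prE m (k : 'I_m) : (pr k : nat) = k.-1. Proof. by []. Qed.

Ltac dcase := rewrite /Delta mxE /=;
  repeat (case: eqP => ?); repeat (case: ifP => ?); simpl;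
  try (exfalso; lia); try ring.

Lemma DlO (R : rcfType) n (l b : 'I_(2*n)) : odd l ->
  Delta R n l b = - ((b : nat) == l.-1)%:R.
Proof. move=> hl; rewrite /Delta mxE /=. case: (boolP (odd b)) => hb;
  repeat (case: eqP => ?); rewrite ?hl ?hb /=; try (exfalso; lia); rewrite ?oppr0 //. Qed.

Lemma DeE (R : rcfType) n (k b : 'I_(2*n)) : odd k ->
  Delta R n (pr k) b = ((b : nat) == k)%:R.
Proof. move=> hl; rewrite /Delta mxE /=. case: (boolP (odd b)) => hb;
  case: (boolP (odd k.-1)) => hk; repeat (case: eqP => ?); rewrite ?hl ?hb /=; try (exfalso; lia); rewrite ?oppr0 //. Qed.

Lemma DcO (R : rcfType) n (a l : 'I_(2*n)) : odd l ->
  Delta R n a l = ((a : nat) == l.-1)%:R.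
Proof. move=> hl; rewrite /Delta mxE /=. case: (boolP (odd a)) => hb;
  repeat (case: eqP => ?); rewrite ?hl ?hb /=; try (exfalso; lia); rewrite ?oppr0 //. Qed.

Lemma DcE (R : rcfType) n (a k : 'I_(2*n)) : odd k ->
  Delta R n a (pr k) = - ((a : nat) == k)%:R.
Proof. move=> hl; rewrite /Delta mxE /=. case: (boolP (odd a)) => hb;
  case: (boolP (odd k.-1)) => hk; repeat (case: eqP => ?); rewrite ?hl ?hb /=; try (exfalso; lia); rewrite ?oppr0 //. Qed.

Lemma delta_mull (R : rcfType) m p (i j : 'I_m) (M : 'M[R]_(m, p)) a b :
  (delta_mx i j *m M) a b = ((a == i)%:R * M j b).
Proof.
rewrite mxE (bigD1 j) //= big1 => [|k /negbTE nk]; first by rewrite !mxE eqxx andbT addr0.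
by rewrite !mxE nk andbF mul0r.
Qed.

Lemma delta_mulr (R : rcfType) m p q (i : 'I_p) (j : 'I_q) (M : 'M[R]_(m, p)) a b :
  (M *m delta_mx i j) a b = (M a i * (b == j)%:R).
Proof.
rewrite mxE (bigD1 i) //= big1 => [|k /negbTE nk]; first by rewrite !mxE eqxx addr0.
by rewrite !mxE nk mulr0.
Qed.


Lemma mxEB (R : rcfType) m p (X Y : 'M[R]_(m,p)) a b : (X - Y) a b = X a b - Y a b.
Proof. by rewrite !mxE. Qed.
Lemma mxED (R : rcfType) m p (X Y : 'M[R]_(m,p)) a b : (X + Y) a b = X a b + Y a b.
Proof. by rewrite !mxE. Qed.
Lemma mxEZ (R : rcfType) m p (c : R) (X : 'M[R]_(m,p)) a b : (c *: X) a b = c * X a b.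
Proof. by rewrite !mxE. Qed.

Definition cc {R : rcfType} (k l : nat) : R := if k == l then 2^-1 else 1.

Definition Gkl {R : rcfType} {n : nat} (k l : 'I_(2*n)) : 'M[R]_(2*n) :=
  delta_mx k l - cc k l *: delta_mx (pr l) (pr k).

Lemma G_mull (R : rcfType) n (k l : 'I_(2*n)) (M : 'M[R]_(2*n)) a b :
  (Gkl k l *m M) a b = (a == k)%:R * M l b - cc k l * ((a == pr l)%:R * M (pr k) b).
Proof. by rewrite /Gkl mulmxBl -scalemxAl mxEB mxEZ !delta_mull. Qed.

Lemma G_mulrT (R : rcfType) n (k l : 'I_(2*n)) (M : 'M[R]_(2*n)) a b :
  (M *m (Gkl k l)^T) a b = M a l * (b == k)%:R - cc k l * (M a (pr k) * (b == pr l)%:R).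
Proof. by rewrite /Gkl linearB linearZ /= !trmx_delta mulmxBr -scalemxAr mxEB mxEZ !delta_mulr. Qed.

Lemma G_symp (R : rcfType) n (k l : 'I_(2*n)) : odd k -> odd l ->
  (1%:M + Gkl k l) *m Delta R n *m (1%:M + Gkl k l)^T = Delta R n.
Proof.
move=> hk hl.
rewrite linearD /= trmx1 mulmxDl mul1mx mulmxDl !mulmxDr !mulmx1.
rewrite -[RHS]addr0 -addrA; congr (_ + _).
apply/matrixP=> a b; rewrite !mxED [RHS]mxE.
rewrite -mulmxA !G_mull !G_mulrT.
rewrite (DlO _ b hl) (DlO _ l hl) (DlO _ (pr k) hl) (DeE _ b hk) (DeE _ l hk) (DeE _ (pr k) hk).
rewrite (DcO _ a hl) (DcE _ a hk) /cc.
have -> : (l == l.-1 :> nat) = false by apply/eqP; lia.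
have -> : (k.-1 == k :> nat) = false by apply/eqP; lia.
have -> : (k.-1 == l.-1 :> nat) = ((k:nat) == l) by apply/eqP/eqP; lia.
rewrite [(l : nat) == k]eq_sym.
by case: (eqVneq (k:nat) l) => _ /=; field.
Qed.


Lemma psd0 (R : rcfType) n : psdC (0 : 'M[R[i]]_(2*n)).
Proof. by move=> v; rewrite mulmx0 mul0mx mxE. Qed.

Lemma psd_symp (R : rcfType) n (T : 'M[R]_(2*n)) :
  T *m Delta R n *m T^T = Delta R n -> psdC (unc_mx 0 T).
Proof. by move=> h; rewrite unc_Pm h subrr /Pm cmx0 scaler0 addr0; apply: psd0. Qed.

Lemma gauss0 (R : rcfType) n (T : 'M[R]_(2*n)) d :
  T *m Delta R n *m T^T = Delta R n -> gaussian_channel T 0 d.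
Proof. by move=> h; split; [rewrite trmx0|split; [rewrite cmx0; apply: psd0|exact: psd_symp]]. Qed.

Lemma realch1 (R : rcfType) n (d : 'cV[R]_(2*n)) :
  (forall i : 'I_(2 * n), odd i -> d i 0 = 0) -> real_gaussian_channel 1%:M 0 d.
Proof.
move=> hd; split; first by apply: gauss0; rewrite mul1mx trmx1 mulmx1.
split => //; split; first by move=> i j _ _; rewrite mxE.
right=> i j hij; rewrite mxE; case: eqP => // e.
by rewrite e eqxx in hij.
Qed.

Lemma realchG (R : rcfType) n (k l : 'I_(2*n)) : odd k -> odd l ->
  real_gaussian_channel (1%:M + Gkl k l) (0 : 'M[R]_(2*n)) 0.
Proof.
move=> hk hl; split; first by apply: gauss0; apply: G_symp.
split; first by move=> i _; rewrite mxE.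
split; first by move=> i j _ _; rewrite mxE.
right=> i j hij; rewrite mxED mxEB mxEZ !mxE.
have e1 : (i == j) = false by apply/negbTE; apply/eqP => e; rewrite e eqxx in hij.
have e2 : (i == k) && (j == l) = false.
  apply/negbTE; apply/andP => -[/eqP e /eqP e']; move: hij; rewrite e e' hk hl.
  by [].
have e3 : (i == pr l) && (j == pr k) = false.
  apply/negbTE; apply/andP => -[/eqP e /eqP e']; move: hij; rewrite e e' /=.
  have -> : odd l.-1 = false by lia.
  have -> : odd k.-1 = false by lia.
  by [].
by rewrite e1 e2 e3 /= mulr0 subr0 addr0.
Qed.


Lemma AdS (R : rcfType) n (A S : 'M[R]_(2*n)) (k l : 'I_(2*n)) i j :
  (A *m delta_mx k l *m S) i j = A i k * S l j.
Proof.
rewrite -mulmxA mxE (bigD1 k) //= big1 => [|a /negbTE nak].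
  by rewrite delta_mull eqxx mul1r addr0.
by rewrite delta_mull nak mul0r mulr0.
Qed.

Lemma AGS (R : rcfType) n (A S : 'M[R]_(2*n)) (k l : 'I_(2*n)) i j :
  (A *m Gkl k l *m S) i j = A i k * S l j - cc k l * (A i (pr l) * S (pr k) j).
Proof. by rewrite /Gkl mulmxBr mulmxBl -scalemxAr -scalemxAl mxEB mxEZ !AdS. Qed.

Lemma SSt (R : rcfType) n (O : 'M[R]_(2*n)) :
  O *m O^T = 1%:M -> O^T *m O = 1%:M ->
  let S := Sigma R n *m O^T *m Sigma R n in S *m S^T = 1%:M /\ S^T *m S = 1%:M.
Proof.
move=> h1 h2 S.
have ST : S^T = Sigma R n *m O *m Sigma R n by rewrite /S !trmx_mul SigmaT trmxK mulmxA.
rewrite ST /S; split.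
  by rewrite !mulmxA -(mulmxA _ (Sigma R n) (Sigma R n)) Sigma2 mulmx1 -(mulmxA _ O^T O) h2 mulmx1 Sigma2.
by rewrite !mulmxA -(mulmxA _ (Sigma R n) (Sigma R n)) Sigma2 mulmx1 -(mulmxA _ O O^T) h1 mulmx1 Sigma2.
Qed.

Lemma count_eo (R : rcfType) m (S : 'M[R]_m) :
  S *m S^T = 1%:M -> S^T *m S = 1%:M ->
  (forall i j : 'I_m, odd i -> ~~ odd j -> S i j = 0) ->
  forall i j : 'I_m, ~~ odd i -> odd j -> S i j = 0.
Proof.
move=> h1 h2 hoe.
pose f (i j : 'I_m) := S i j ^+ 2.
have rs i : \sum_j f i j = 1.
  transitivity ((S *m S^T) i i); first by rewrite mxE; apply: eq_bigr => j _; rewrite /f mxE expr2.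
  by rewrite h1 mxE eqxx.
have cs j : \sum_i f i j = 1.
  transitivity ((S^T *m S) j j); first by rewrite mxE; apply: eq_bigr => i _; rewrite /f mxE expr2.
  by rewrite h2 mxE eqxx.
have E1 : \sum_(i : 'I_m | ~~ odd i) \sum_j f i j = \sum_(i : 'I_m | ~~ odd i) (1 : R)
  by apply: eq_bigr => i _; apply: rs.
have E2 : \sum_(j : 'I_m | ~~ odd j) \sum_i f i j = \sum_(i : 'I_m | ~~ odd i) (1 : R)
  by apply: eq_bigr => j _; apply: cs.
have E2' : \sum_(j : 'I_m | ~~ odd j) \sum_i f i j = \sum_(i : 'I_m | ~~ odd i) \sum_(j : 'I_m | ~~ odd j) f i j.
  rewrite [RHS]exchange_big /=; apply: eq_bigr => j hj.
  rewrite (bigID (fun i : 'I_m => odd i)) /= big1 ?add0r // => i hi.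
  by rewrite /f hoe // expr2 mul0r.
have E3 : \sum_(i : 'I_m | ~~ odd i) \sum_(j : 'I_m | odd j) f i j = 0.
  have : \sum_(i : 'I_m | ~~ odd i) \sum_j f i j = \sum_(j : 'I_m | ~~ odd j) \sum_i f i j by rewrite E1 E2.
  rewrite E2' (eq_bigr (fun i => \sum_(j : 'I_m | odd j) f i j + \sum_(j : 'I_m | ~~ odd j) f i j)) => [|i _]; last by rewrite (bigID (fun j : 'I_m => odd j)).
  rewrite big_split /=.
  by move/eqP; rewrite -subr_eq0 addrK => /eqP.
move=> i j hi hj.
have ge0 : forall i : 'I_m, 0 <= \sum_(j : 'I_m | odd j) f i j.
  by move=> k; apply: sumr_ge0 => l _; rewrite /f sqr_ge0.
have := psumr_eq0P (fun i _ => ge0 i) E3 hi.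
move/psumr_eq0P => /(_ (fun l _ => sqr_ge0 (S i l)) j hj).
by move/eqP; rewrite sqrf_eq0 => /eqP.
Qed.


Lemma forward (R : rcfType) (n : nat) (n_ge1 : (1 <= n)%N)
    (A O Y : 'M[R]_(2 * n)) (dbar : 'cV[R]_(2 * n)) :
  gaussian_superchannel A O Y dbar ->
  real_gaussian_superchannel A O Y dbar ->
  ((forall i : 'I_(2 * n), odd i -> dbar i 0 = 0) /\
    (forall i j : 'I_(2 * n), ~~ odd i -> odd j -> Y i j = 0)) /\
   ((forall i j : 'I_(2 * n), odd i -> A i j = 0) \/
    ((forall i j : 'I_(2 * n), odd i != odd j -> A i j = 0) /\
     (forall i j : 'I_(2 * n), odd i != odd j -> O i j = 0))).
Proof.
move=> gs [_ H].
have [YT [OO [psY psO]]] := gs.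
have hO : O^T *m O = 1%:M by apply: mulmx1C.
pose S := Sigma R n *m O^T *m Sigma R n.
have scTE : forall T, sc_T A O T = A *m T *m S by move=> T; rewrite /sc_T /S !mulmxA.
have [SS1 SS2] := SSt OO hO.
rewrite -/S in SS1 SS2.
have [_ [hd0 [hN0 hT0]]] := H _ _ _ (@realch1 R n 0 (fun i _ => mxE _ _ _ _)).
have hdb : forall i : 'I_(2 * n), odd i -> dbar i 0 = 0.
  by move=> i hi; have := hd0 i hi; rewrite /sc_d mulmx0 add0r.
have hY : forall i j : 'I_(2 * n), ~~ odd i -> odd j -> Y i j = 0.
  by move=> i j hi hj; have := hN0 i j hi hj; rewrite /sc_N mulmx0 mul0mx add0r.
have hAoe : forall i j : 'I_(2 * n), odd i -> ~~ odd j -> A i j = 0.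
  move=> i j hi hj.
  have hdj : forall i' : 'I_(2 * n), odd i' -> (delta_mx j 0 : 'cV[R]_(2*n)) i' 0 = 0.
    move=> i' hi'; rewrite mxE; case: eqP => //= e.
    by rewrite e (negbTE hj) in hi'.
  have [_ [hd _]] := H _ _ _ (realch1 hdj).
  have := hd i hi; rewrite /sc_d mxED hdb // addr0 delta_mulr.
  by rewrite eqxx mulr1.
split => //.
case: (classic (forall i j : 'I_(2 * n), odd i -> A i j = 0)) => hA; first by left.
right.
have [i0 [j0 [hi0 hA0]]] : exists i0 j0 : 'I_(2*n), odd i0 /\ A i0 j0 != 0.
  apply: NNPP => hne; apply: hA => i j hi; apply: NNPP => hij.
  apply: hne; exists i, j; split => //; exact/eqP.
have hj0 : odd j0.
  by apply: contraNT hA0 => hj; rewrite hAoe.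
have rowz : forall T : 'M[R]_(2*n), (OR (A *m T *m S) \/ PB (A *m T *m S)) ->
    forall j : 'I_(2*n), ~~ odd j -> (A *m T *m S) i0 j = 0.
  move=> T [h|h] j hj; first exact: h.
  by apply: h; rewrite hi0; case: (odd j) hj.
have hAS : OR (A *m 1%:M *m S) \/ PB (A *m 1%:M *m S) by rewrite -scTE.
have hSoe : forall l j : 'I_(2*n), odd l -> ~~ odd j -> S l j = 0.
  move=> l j hl hj.
  have [_ [_ [_ hT]]] := H _ _ _ (@realchG R n _ _ hj0 hl).
  rewrite !scTE in hT.
  have := rowz _ hT j hj.
  rewrite mulmxDr mulmxDl mxED (rowz _ hAS j hj) add0r AGS.
  rewrite (hAoe i0 (pr l)) //; last by rewrite /=; lia.
  rewrite mul0r mulr0 subr0 => /eqP; rewrite mulf_eq0 (negbTE hA0) /=.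
  by move/eqP.
have hSeo := count_eo SS1 SS2 hSoe.
have AE : A = A *m S *m S^T by rewrite -mulmxA SS1 mulmx1.
rewrite mulmx1 in hAS.
have hASpb : PB (A *m S).
  case: hAS => // hor; exfalso; move/eqP: hA0; apply.
  rewrite AE mxE big1 // => j _; by rewrite hor ?mul0r.
split.
  move=> i m him.
  case hi: (odd i).
    by apply: hAoe => //; move: him; rewrite hi; case: (odd m).
  have hm : odd m by move: him; rewrite hi; case: (odd m).
  rewrite AE mxE big1 // => j _.
  case hj: (odd j); first by rewrite hASpb ?mul0r // hi hj.
  by rewrite [S^T j m]mxE hSoe ?mulr0 // hj.
move=> i j hij.
have Sji : S j i = sg (odd j) * O i j * sg (odd i).
  by rewrite /S Sigma_mulr Sigma_mull mxE.
have : S j i = 0.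
  case hj: (odd j).
    by apply: hSoe => //; move: hij; rewrite hj; case: (odd i).
  by apply: hSeo; rewrite ?hj //; move: hij; rewrite hj; case: (odd i).
rewrite Sji => /eqP; rewrite !mulf_eq0 => /orP [/orP [h|/eqP //]|h].
  by move: h; rewrite /sg; case: (odd j); rewrite ?oppr_eq0 oner_eq0.
by move: h; rewrite /sg; case: (odd i); rewrite ?oppr_eq0 oner_eq0.
Qed.



Lemma back (R : rcfType) (n : nat) (A O Y : 'M[R]_(2 * n)) (dbar : 'cV[R]_(2 * n)) :
  gaussian_superchannel A O Y dbar ->
  ((forall i : 'I_(2 * n), odd i -> dbar i 0 = 0) /\
    (forall i j : 'I_(2 * n), ~~ odd i -> odd j -> Y i j = 0)) /\
   ((forall i j : 'I_(2 * n), odd i -> A i j = 0) \/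
    ((forall i j : 'I_(2 * n), odd i != odd j -> A i j = 0) /\
     (forall i j : 'I_(2 * n), odd i != odd j -> O i j = 0))) ->
  real_gaussian_superchannel A O Y dbar.
Proof.
move=> gs [[hd hY] hAO]; split => // T N d [[NT [psN psU]] [hdd [hN hT]]].
have [YT [OO [psY psO]]] := gs.
have hO : O^T *m O = 1%:M by apply: mulmx1C.
split; [split; [|split]|split; [|split]].
- by rewrite /sc_N linearD /= trmx_mul trmx_mul trmxK NT YT mulmxA.
- rewrite /sc_N cmxD cmxM cmxM cmxT.
  apply: psdD; first exact: psd_congr.
  by rewrite unc_Pm in psY; exact: Pm_real psY.
- rewrite unc_Pm Kident //.
  have -> : sc_N A Y N = A *m N *m A^T + Y + (A *m T *m Sigma R n *m O^T) *m 0 *m (A *m T *m Sigma R n *m O^T)^T.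
    by rewrite mulmx0 mul0mx addr0.
  apply: Pm_add; last by apply: Pm_congr; rewrite -unc_Pm.
  apply: Pm_add; last by rewrite -unc_Pm.
  by apply: Pm_congr; rewrite -unc_Pm.
- move=> i hi; rewrite /sc_d !mxE hd // addr0 big1 // => j _.
  case oj: (odd j); first by rewrite hdd ?mulr0.
  case: hAO => [hA|[hA _]]; first by rewrite hA ?mul0r.
  by rewrite hA ?mul0r // hi oj.
- move=> i j hi hj; rewrite /sc_N mxE hY // addr0.
  case: hAO => [hA|[hA _]]; first exact: EO_ORT_mul.
  apply: EO_PB_mul => //; last exact: PB_tr.
  exact: PB_EO_mul.
- rewrite /sc_T.
  case: hAO => [hA|[hA hO']]; first by left; do 4 apply: OR_mul.
  case: hT => [hT|hT].
    by left; do 3 apply: OR_mul; exact: PB_OR_mul.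
  right; apply: PB_mul; last exact: PB_Sigma.
  apply: PB_mul; last exact: PB_tr.
  apply: PB_mul; last exact: PB_Sigma.
  exact: PB_mul.
Qed.

Unset Implicit Arguments.

Theorem theorem1 (R : rcfType) (n : nat) (n_ge1 : (1 <= n)%N)
    (A O Y : 'M[R]_(2 * n)) (dbar : 'cV[R]_(2 * n)) :
  gaussian_superchannel A O Y dbar ->
  (real_gaussian_superchannel A O Y dbar <->
   ((forall i : 'I_(2 * n), odd i -> dbar i 0 = 0) /\
    (forall i j : 'I_(2 * n), ~~ odd i -> odd j -> Y i j = 0)) /\
   ((forall i j : 'I_(2 * n), odd i -> A i j = 0) \/
    ((forall i j : 'I_(2 * n), odd i != odd j -> A i j = 0) /\
     (forall i j : 'I_(2 * n), odd i != odd j -> O i j = 0)))).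
Proof.
move=> gs; split; first exact: forward.
exact: back.
Qed.
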